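(* Let $(b,w)\in\mathbb{N}^2$ (where $\mathbb{N}=\{0,1,2,\dots\}$). Then there exists a partition $\lambda$ such that $(b(\lambda),w(\lambda))=(b,w)$ if and only if \[(b-w)^2\le b.\] Furthermore, the same statement holds if one restricts to partitions into distinct parts.
   Context: A partition is a finite nonincreasing sequence $\lambda=(\lambda_1,\lambda_2,\dots,\lambda_r)$ of positive integers (the empty sequence is the unique partition of $0$); set $\lambda_i=0$ for $i<1$ and $i>r$. A partition is into distinct parts if all $\lambda_i$ are distinct. Its Ferrers graph consists of unit squares, with row $i$ (rows indexed from $i=0$) containing $\lambda_{i+1}$ squares, left-justified, columns indexed from $0$. Colour the square in row $r$ and column $c$ black if $r+c$ is even and white if $r+c$ is odd (chess colouring, the corner square in row $0$, column $0$ being black). Then $b(\lambda)$ is the number of black squares and $w(\lambda)$ the number of white squares; explicitly $b(\lambda)=\sum_{j}\lceil \lambda_{2j+1}/2\rceil+\sum_j\lfloor \lambda_{2j}/2\rfloor$ and $w(\lambda)=\sum_{j}\lfloor \lambda_{2j+1}/2\rfloor+\sum_j\lceil \lambda_{2j}/2\rceil$. *)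

(* Defs.v *)
From mathcomp Require Import all_boot all_order all_algebra.
Set Implicit Arguments. Unset Strict Implicit. Unset Printing Implicit Defensive.

Definition is_partition (lam : seq nat) : bool :=
  sorted geq lam && all (fun x => 0 < x) lam.

Definition distinct_parts (lam : seq nat) : bool := uniq lam.

(* Ferrers graph: row r (0-indexed) holds nth 0 lam r squares, columns 0..;
   square (r, c) is black iff r + c is even. *)
Definition black (lam : seq nat) : nat :=
  \sum_(r < size lam) \sum_(c < nth 0 lam r) ~~ odd (r + c).
Definition white (lam : seq nat) : nat :=
  \sum_(r < size lam) \sum_(c < nth 0 lam r) odd (r + c).

(* Main.v *)
Require Import Defs.
From mathcomp Require Import all_boot all_order all_algebra.
Import GRing.Theory Num.Theory.
Local Open Scope ring_scope.
From mathcomp Require Import zify ring.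
Local Open Scope nat_scope.

Lemma sum_even x : \sum_(c < x) (~~ odd c : nat) = uphalf x.
Proof.
elim: x => [|x IH]; first by rewrite big_ord0.
rewrite big_ord_recr /= IH uphalf_half /=.
by case: (odd x) => /=; rewrite ?add0n ?addn0 ?addn1.
Qed.

Lemma sum_odd x : \sum_(c < x) (odd c : nat) = x./2.
Proof.
elim: x => [|x IH]; first by rewrite big_ord0.
rewrite big_ord_recr /= IH uphalf_half.
by case: (odd x) => /=; rewrite ?add0n ?addn0 ?addn1.
Qed.

Lemma black_cons x l : black (x :: l) = uphalf x + white l.
Proof.
rewrite /black /white /= big_ord_recl /=.
under eq_bigr => i _ do rewrite add0n.
rewrite sum_even; congr (_ + _); apply: eq_bigr => i _.
rewrite /=; apply: eq_bigr => c _.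
by rewrite ?add0n ?negbK.
Qed.

Lemma white_cons x l : white (x :: l) = x./2 + black l.
Proof.
rewrite /black /white /= big_ord_recl /=.
under eq_bigr => i _ do rewrite add0n.
rewrite sum_odd; congr (_ + _); apply: eq_bigr => i _.
Qed.

Lemma black_nil : black [::] = 0. Proof. by rewrite /black big_ord0. Qed.
Lemma white_nil : white [::] = 0. Proof. by rewrite /white big_ord0. Qed.

Section Nec.
Local Open Scope ring_scope.

Lemma nec (l : seq nat) : sorted geq l ->
  let B := (black l)%:Z in let W := (white l)%:Z in let h := (head 0%N l)%:Z in
  [/\ 2*(B-W) - 1 <= h, -(2*(B-W)) <= h & 2*((B-W)*(B-W)) - (B-W) <= B + W].
Proof.
elim: l => [|x l IH] /=.
  by rewrite black_nil white_nil.
move=> Hp.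
have Hs : sorted geq l by apply: (path_sorted Hp).
have Hh : (head 0%N l <= x)%N by case: l Hp {IH Hs} => //= y l /andP[].
case: (IH Hs) => /=.
rewrite black_cons white_cons.
move: (black l) (white l) (head 0%N l) Hh => B W h Hh.
rewrite uphalf_half.
have := odd_double_half x.
case: (odd x) => /= Hx H1 H2 H3.
- have Hx' : (x = 1 + (x./2).*2)%N by rewrite Hx.
  move: (x./2) Hx' => q Hx'. subst x. rewrite -!addnn in Hh *.
  have E : (Posz (1+q+W)%N - Posz (q+B)%N) = 1 - (B%:Z - W%:Z) by lia.
  rewrite E.
  have E2 : (Posz (1+q+W)%N + Posz (q+B)%N) = (1 + q + q)%:Z + (B%:Z + W%:Z) by lia.
  rewrite E2.
  move: H1 H2 H3; set D := (B%:Z - W%:Z) => H1 H2 H3.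
  have sq : (1-D)*(1-D) = D*D - 2*D + 1 by ring.
  rewrite sq; move: (D*D) H3 => S H3.
  constructor; lia.
- have Hx' : (x = (x./2).*2)%N by rewrite -[in LHS]Hx.
  move: (x./2) Hx' => q Hx'. subst x. rewrite -!addnn in Hh *.
  have E : (Posz (0+q+W)%N - Posz (q+B)%N) = - (B%:Z - W%:Z) by lia.
  rewrite E.
  have E2 : (Posz (0+q+W)%N + Posz (q+B)%N) = (q + q)%:Z + (B%:Z + W%:Z) by lia.
  rewrite E2.
  move: H1 H2 H3; set D := (B%:Z - W%:Z) => H1 H2 H3.
  have sq : (-D)*(-D) = D*D by ring.
  rewrite sq; move: (D*D) H3 => S H3.
  constructor; lia.
Qed.

End Nec.
Local Open Scope nat_scope.

Fixpoint stair k := if k is k'.+1 then k :: stair k' else [::].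
Definition bumpl (s : seq nat) m :=
  if s is x :: l then (x + 2 * m) :: l else if m is 0 then [::] else [:: 2 * m].

Lemma half_add2 x m : uphalf (x + 2 * m) = uphalf x + m /\ (x+2 * m)./2 = x./2 + m.
Proof.
have E : x + 2 * m = odd x + (x./2 + m).*2 by rewrite doubleD addnA odd_double_half -mul2n.
rewrite E !uphalf_half oddD odd_double half_bit_double addnA.
by rewrite oddb addbF.
Qed.

Lemma black_bump s m : black (bumpl s m) = black s + m /\ white (bumpl s m) = white s + m.
Proof.
case: s => [|x l] /=.
  case: m => [|m] /=; first by rewrite black_nil white_nil.
  rewrite black_cons white_cons black_nil white_nil !addn0 !add0n.
  have := half_add2 0 m.+1; rewrite add0n /= => -[-> ->]; by [].
rewrite !black_cons !white_cons; have [-> ->] := half_add2 x m; split; lia.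
Qed.

Lemma stairE j :
  [/\ black (stair j.*2) = j*j, white (stair j.*2) = j*j+j,
      black (stair j.*2.+1) = j.+1*j.+1 & white (stair j.*2.+1) = j*j.+1].
Proof.
elim: j => [|j [IH1 IH2 IH3 IH4]].
  by rewrite /= black_cons white_cons black_nil white_nil.
rewrite doubleS /=.
have U1 : uphalf j.*2.+1 = j.+1 by rewrite /= doubleK.
have U2 : (j.*2.+1)./2 = j by rewrite /= uphalf_half odd_double doubleK.
have U3 : uphalf j.*2.+2 = j.+1 by rewrite /= uphalf_half odd_double doubleK.
have U4 : (j.*2.+2)./2 = j.+1 by rewrite /= doubleK.
have U5 : uphalf j.*2.+3 = j.+2 by rewrite /= doubleK.
have U6 : (j.*2.+3)./2 = j.+1 by rewrite /= uphalf_half odd_double doubleK.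
rewrite !(black_cons, white_cons) U1 U2 U3 U4 U5 U6 IH1 IH2.
split; nia.
Qed.

Lemma path_stair x k : k < x -> path gtn x (stair k).
Proof.
elim: k x => [|k IH] x //= Hk; rewrite Hk /=; exact: IH.
Qed.

Lemma all_stair k : all (fun y => 0 < y) (stair k).
Proof. by elim: k => //= k ->. Qed.

Lemma bump_part k m : is_partition (bumpl (stair k) m) /\ distinct_parts (bumpl (stair k) m).
Proof.
have H : sorted gtn (bumpl (stair k) m) && all (fun y => 0 < y) (bumpl (stair k) m).
  case: k => [|k] /=; first by case: m.
  rewrite all_stair andbT /= path_stair /=; lia. 
case/andP: H => Hs Ha; split.
  rewrite /is_partition Ha andbT.
  by apply: sub_sorted Hs => x y /= /ltnW.
apply: sorted_uniq Hs.
  by move=> x y z /= H1 H2; lia.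
by move=> x /=; rewrite ltnn.
Qed.

Local Open Scope ring_scope.

Lemma suff (b w : nat) : (b%:Z - w%:Z) ^+ 2 <= b%:Z ->
  exists lam : seq nat, [/\ is_partition lam, distinct_parts lam,
                              black lam = b & white lam = w].
Proof.
rewrite expr2 => H.
case: (leqP w b) => Hwb.
  case E: (b - w)%N => [|j].
    have [P1 P2] := bump_part 0 b.
    exists (bumpl (stair 0) b); have [-> ->] := black_bump (stair 0) b.
    by rewrite /= black_nil white_nil; split => //; lia.
  have hd : b%:Z - w%:Z = (j.+1)%:Z by lia.
  rewrite hd -PoszM lez_nat in H.
  have [P1 P2] := bump_part j.*2.+1 (b - j.+1 * j.+1).
  exists (bumpl (stair j.*2.+1) (b - j.+1 * j.+1)).
  have [-> ->] := black_bump (stair j.*2.+1) (b - j.+1 * j.+1).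
  have [_ _ -> ->] := stairE j.
  split => //; nia.
set j := (w - b)%N.
have hd : b%:Z - w%:Z = - (j%:Z) by rewrite /j; lia.
rewrite hd mulrNN -PoszM lez_nat in H.
have [P1 P2] := bump_part j.*2 (b - j * j).
exists (bumpl (stair j.*2) (b - j * j)).
have [-> ->] := black_bump (stair j.*2) (b - j * j).
have [-> -> _ _] := stairE j.
split => //; rewrite /j in H *; nia.
Qed.

Local Open Scope ring_scope.

Theorem theoremA (b w : nat) :
  ((exists lam : seq nat, is_partition lam /\ black lam = b /\ white lam = w)
     <-> ((b%:Z - w%:Z) ^+ 2 <= b%:Z))
  /\
  ((exists lam : seq nat, [/\ is_partition lam, distinct_parts lam,
                              black lam = b & white lam = w])
     <-> ((b%:Z - w%:Z) ^+ 2 <= b%:Z)).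
Proof.
have N : forall lam : seq nat, is_partition lam -> black lam = b -> white lam = w ->
    (b%:Z - w%:Z) ^+ 2 <= b%:Z.
  move=> lam /andP[Hs _] Hb Hw.
  have [_ _] := @nec lam Hs; rewrite /= Hb Hw => H.
  rewrite expr2; lia.
split; split.
- by case=> lam [P [Hb Hw]]; exact: N P Hb Hw.
- by move/suff => [lam [P _ Hb Hw]]; exists lam.
- by case=> lam [P _ Hb Hw]; exact: N P Hb Hw.
- exact: suff.
Qed.
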